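(* Let $G=(V,E)$ be an $n$-vertex graph, $q>0$ an integer, and $0<\alpha\le1$. Let $V_\alpha=\{v\in V: r(v)\ge\alpha\}$ and $c_q=\sum_{i=0}^{q}q^i$. Then every $v\in V_\alpha$ satisfies $\deg(v)\ge n\alpha/c_q$.
   Context: $q$-random BFS ($q$-RBFS) from a vertex $v$ in the random neighbor model (where a random neighbor query for $u$ returns a uniformly random neighbor of $u$): initialize a queue $Q=(v)$, level $\ell[v]=0$ (all others $\infty$), and $H=(\{v\},\emptyset)$ rooted at $v$; while $Q$ is nonempty, pop $u$ and make $q$ independent random neighbor queries for $u$ obtaining $s_{u,1},\dots,s_{u,q}$; for each $i$ add $s_{u,i}$ and the edge $\{u,s_{u,i}\}$ to $H$, and if $\ell[u]<q-1$ and $\ell[s_{u,i}]=\infty$, set $\ell[s_{u,i}]=\ell[u]+1$ and enqueue $s_{u,i}$; return $H$ (undirected, simple). The reach probability $r(v)$ of a vertex $v$ is the probability that a $q$-RBFS started at a uniformly random vertex of $V$ reaches (includes) $v$. *)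

(* Defs.v *)
From mathcomp Require Import all_boot all_order all_algebra.
Set Implicit Arguments. Unset Strict Implicit. Unset Printing Implicit Defensive.
Import Order.TTheory GRing.Theory Num.Theory.
Local Open Scope ring_scope.

Section RBFS.
Variables (V : finType) (e : rel V) (R : realFieldType) (q : nat).

Definition deg (u : V) : nat := #|[set w | e u w]|.

Definition avg_nbr (u : V) (f : V -> R) : R :=
  (\sum_(w | e u w) f w) / (deg u)%:R.

(* One query of u returning w: add w to H; if l[u] < q-1 and l[w] = oo,
   set l[w] := l[u]+1 and enqueue w. *)
Definition rbfs_step (u w : V) (Q : seq V) (lev : V -> option nat)
    (H : {set V}) : seq V * (V -> option nat) * {set V} :=
  let H' := w |: H in
  match lev u with
  | Some lu =>
      if (lu < q.-1)%N && (lev w == None) then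
        (rcons Q w, (fun x => if x == w then Some lu.+1 else lev x), H')
      else (Q, lev, H')
  | None => (Q, lev, H')
  end.

(* Probability (over the random neighbor queries) that the remaining
   q-RBFS run, from state (Q, lev, H), ends with target in H.
   fuel bounds the number of pops (each vertex is enqueued at most once). *)
Fixpoint rbfs_prob (target : V) (fuel : nat) (Q : seq V)
    (lev : V -> option nat) (H : {set V}) {struct fuel} : R :=
  match fuel with
  | O => (target \in H)%:R
  | fuel'.+1 =>
      match Q with
      | [::] => (target \in H)%:R
      | u :: Q' =>
          let fix queries (k : nat) (Q0 : seq V) (lev0 : V -> option nat)
                (H0 : {set V}) : R :=
            match k with
            | O => rbfs_prob target fuel' Q0 lev0 H0
            | k'.+1 =>
                avg_nbr u (fun w =>
                  let '(Q1, lev1, H1) := rbfs_step u w Q0 lev0 H0 in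
                  queries k' Q1 lev1 H1)
            end
          in queries q Q' lev H
      end
  end.

Definition rbfs_reach_from (s target : V) : R :=
  rbfs_prob target #|V|.+1 [:: s]
    (fun x => if x == s then Some 0%N else None) [set s].

Definition reach (v : V) : R :=
  (\sum_(s : V) rbfs_reach_from s v) / #|V|%:R.

End RBFS.

Definition c_q (q : nat) : nat := (\sum_(i < q.+1) q ^ i)%N.

(* Main.v *)
Require Import Defs.
From mathcomp Require Import all_boot all_order all_algebra.
From mathcomp Require Import zify ring lra.
Import Order.TTheory GRing.Theory Num.Theory.
Local Open Scope ring_scope.

Lemma avg_nbr_le (V : finType) (e : rel V) (R : realFieldType) u (f g : V -> R) :
  (forall w, e u w -> f w <= g w) -> avg_nbr e u f <= avg_nbr e u g.
Proof.
move=> H; rewrite /avg_nbr ler_wpM2r ?invr_ge0 ?ler0n //.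
by apply: ler_sum => w /H.
Qed.

Lemma avg_nbr_ge0 (V : finType) (e : rel V) (R : realFieldType) u (f : V -> R) :
  (forall w, e u w -> 0 <= f w) -> 0 <= avg_nbr e u f.
Proof.
move=> H; rewrite /avg_nbr mulr_ge0 ?invr_ge0 ?ler0n //.
by apply: sumr_ge0 => w /H.
Qed.

Lemma avg_nbr_addc (V : finType) (e : rel V) (R : realFieldType) u (c : R) (f : V -> R) :
  (0 < deg e u)%N -> avg_nbr e u (fun w => c + f w) = c + avg_nbr e u f.
Proof.
move=> Hd; rewrite /avg_nbr big_split /= sumr_const mulrDl.
have -> : #|[pred w | e u w]| = deg e u by rewrite /deg cardsE.
by rewrite -(mulr_natr c) -mulrA mulfV ?mulr1 // pnatr_eq0 -lt0n.
Qed.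

Lemma stationary (V : finType) (e : rel V) (R : realFieldType) (f : V -> R) :
  symmetric e -> (forall u : V, (0 < deg e u)%N) ->
  \sum_s (deg e s)%:R * avg_nbr e s f = \sum_x (deg e x)%:R * f x.
Proof.
move=> Hs Hd.
transitivity (\sum_s \sum_x (if e s x then f x else 0)).
  apply: eq_bigr => s _; rewrite /avg_nbr mulrC -mulrA mulVf ?mulr1.
    by rewrite big_mkcond.
  by rewrite pnatr_eq0 -lt0n.
rewrite exchange_big; apply: eq_bigr => x _.
rewrite -big_mkcond /= sumr_const mulr_natl.
congr (_ *+ _); rewrite /deg cardsE; apply: eq_card => s.
by rewrite unfold_in /= Hs.
Qed.

Fixpoint wj (V : finType) (e : rel V) (R : realFieldType) (q : nat) (t : V)
   (j : nat) (x : V) : R :=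
  match j with
  | O => 0
  | j'.+1 => q%:R * avg_nbr e x (fun y => (y == t)%:R + wj V e R q t j' y)
  end.
Arguments wj {V} e R q t j x.

Definition wt (V : finType) (e : rel V) (R : realFieldType) (q : nat) (t : V)
  (lo : option nat) (x : V) : R :=
  match lo with
  | Some l => wj e R q t (if (l < q.-1)%N then (q - l)%N else 1%N) x
  | None => 0
  end.
Arguments wt {V} e R q t lo x.

Definition Phi (V : finType) (e : rel V) (R : realFieldType) (q : nat) (t : V)
  (Q : seq V) (lev : V -> option nat) (H : {set V}) : R :=
  (t \in H)%:R + \sum_(x <- Q) wt e R q t (lev x) x.
Arguments Phi {V} e R q t Q lev H.

Definition Inv (V : finType) (Q : seq V) (lev : V -> option nat) :=
  all (fun x => lev x != None) Q.
Arguments Inv {V} Q lev.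

Lemma wj_ge0 (V : finType) (e : rel V) (R : realFieldType) q t j x :
  0 <= wj e R q t j x.
Proof.
elim: j x => [|j IH] x //=.
rewrite mulr_ge0 ?ler0n //; apply: avg_nbr_ge0 => w _.
by rewrite addr_ge0 ?ler0n.
Qed.

Lemma wt_ge0 (V : finType) (e : rel V) (R : realFieldType) q t lo x :
  0 <= wt e R q t lo x.
Proof. by case: lo => [l|] //=; apply: wj_ge0. Qed.

Lemma Phi_ge (V : finType) (e : rel V) (R : realFieldType) q t (Q : seq V) lev (H : {set V}) :
  (t \in H)%:R <= Phi e R q t Q lev H.
Proof.
rewrite /Phi lerDl; apply: sumr_ge0 => x _; apply: wt_ge0.
Qed.

Definition queries_ext (V : finType) (e : rel V) (R : realFieldType) (q : nat)
  (t u : V) (fuel' : nat) :=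
  fix queries (k : nat) (Q0 : seq V) (lev0 : V -> option nat)
                (H0 : {set V}) : R :=
            match k with
            | O => rbfs_prob e R q t fuel' Q0 lev0 H0
            | k'.+1 =>
                avg_nbr e u (fun w =>
                  let '(Q1, lev1, H1) := rbfs_step q u w Q0 lev0 H0 in
                  queries k' Q1 lev1 H1)
            end.
Arguments queries_ext {V} e R q t u fuel' k Q0 lev0 H0.

Lemma rbfs_prob_cons (V : finType) (e : rel V) (R : realFieldType) q t fuel u (Q : seq V) lev (H : {set V}) :
  rbfs_prob e R q t fuel.+1 (u :: Q) lev H = queries_ext e R q t u fuel q Q lev H.
Proof. by []. Qed.

Lemma step_lemma (V : finType) (e : rel V) (R : realFieldType) q t u lu w
  (Q0 : seq V) lev0 (H0 : {set V}) Q1 lev1 H1 :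
  Inv Q0 lev0 -> lev0 u = Some lu ->
  rbfs_step q u w Q0 lev0 H0 = (Q1, lev1, H1) ->
  [/\ Inv Q1 lev1, lev1 u = Some lu &
   Phi e R q t Q1 lev1 H1 <= Phi e R q t Q0 lev0 H0 +
     ((w == t)%:R + (if (lu < q.-1)%N then wj e R q t (q - lu).-1 w else 0))].
Proof.
move=> HI Hu; rewrite /rbfs_step Hu.
have HH : ((t \in w |: H0)%:R <= (t \in H0)%:R + (w == t)%:R :> R).
  rewrite in_setU1 eq_sym; case: (w == t); case: (t \in H0) => /=; lra.
case: ifP => [/andP[Hlt /eqP Hw]|Hc] [<- <- <-].
- have Hneq : forall x, x \in Q0 -> (x == w) = false.
    move=> x xQ; apply/negbTE/eqP => Exw; move/allP: HI => /(_ x xQ).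
    by rewrite Exw Hw.
  have Huw : (u == w) = false by apply/negbTE/eqP => Euw; rewrite -Euw Hu in Hw.
  split.
  + rewrite /Inv all_rcons eqxx /=; apply/allP => x xQ.
    by rewrite Hneq //; move/allP: HI => /(_ x xQ).
  + by rewrite Huw.
  + rewrite /Phi -cats1 big_cat big_seq1 /= eqxx.
    rewrite [X in _ <= X](_ : _ = ((t \in H0)%:R + (w == t)%:R) +
       (\sum_(x <- Q0) wt e R q t (lev0 x) x + wj e R q t (q - lu).-1 w)); last first.
      by rewrite Hlt; ring.
    apply: lerD => //; apply: lerD.
      rewrite big_seq [X in _ <= X]big_seq le_eqVlt; apply/orP; left; apply/eqP.
      by apply: eq_bigr => x xQ; rewrite Hneq.
    rewrite /wt; have -> : ((if (lu.+1 < q.-1)%N then (q - lu.+1)%N else 1%N) = (q - lu).-1).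
      by case: ifP; lia.
    by [].
- split => //.
  rewrite /Phi.
  have : 0 <= (if (lu < q.-1)%N then wj e R q t (q - lu).-1 w else 0).
    by case: ifP => _ //; apply: wj_ge0.
  move: HH; lra.
Qed.

Lemma queries_le (V : finType) (e : rel V) (R : realFieldType) q t u lu fuel' :
  (forall u : V, (0 < deg e u)%N) ->
  (forall (Q : seq V) lev (H : {set V}), Inv Q lev ->
      rbfs_prob e R q t fuel' Q lev H <= Phi e R q t Q lev H) ->
  forall k (Q0 : seq V) lev0 (H0 : {set V}), Inv Q0 lev0 -> lev0 u = Some lu ->
  queries_ext e R q t u fuel' k Q0 lev0 H0 <= Phi e R q t Q0 lev0 H0 +
    k%:R * avg_nbr e u (fun w => (w == t)%:R +
       (if (lu < q.-1)%N then wj e R q t (q - lu).-1 w else 0)).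
Proof.
move=> Hd IH; elim=> [|k IHk] Q0 lev0 H0 HI Hu /=.
  by rewrite mul0r addr0; apply: IH.
set g := (fun w => (w == t)%:R +
       (if (lu < q.-1)%N then wj e R q t (q - lu).-1 w else 0)).
apply: le_trans (@avg_nbr_le _ e R u _
   (fun w => (Phi e R q t Q0 lev0 H0 + k%:R * avg_nbr e u g) + g w) _) _.
  move=> w _; case E: rbfs_step => [[Q1 lev1] H1].
  have [HI1 Hu1 HP] := @step_lemma _ e R q t u lu w _ _ _ _ _ _ HI Hu E.
  apply: le_trans (IHk _ _ _ HI1 Hu1) _.
  rewrite /g; move: HP; lra.
rewrite avg_nbr_addc // mulrSr; lra.
Qed.

Lemma main_bound (V : finType) (e : rel V) (R : realFieldType) q t :
  (forall u : V, (0 < deg e u)%N) ->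
  forall fuel (Q : seq V) lev (H : {set V}), Inv Q lev ->
      rbfs_prob e R q t fuel Q lev H <= Phi e R q t Q lev H.
Proof.
move=> Hd; elim=> [|f IH] Q lev H HI; first exact: Phi_ge.
case: Q HI => [|u Q'] HI; first exact: Phi_ge.
rewrite rbfs_prob_cons.
move: HI; rewrite /Inv /= => /andP[]; case Hu: (lev u) => [lu|] // _ HI.
apply: le_trans (@queries_le _ e R q t u lu f Hd IH q _ _ _ HI Hu) _.
rewrite /Phi big_cons Hu /=.
suff -> : wj e R q t (if (lu < q.-1)%N then (q - lu)%N else 1%N) u =
  q%:R * avg_nbr e u (fun w => (w == t)%:R +
       (if (lu < q.-1)%N then wj e R q t (q - lu).-1 w else 0)) by lra.
case: ifP => Hlt.
  by have -> : (q - lu = (q - lu).-1.+1)%N by lia.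
by [].
Qed.

Lemma S_closed (V : finType) (e : rel V) (R : realFieldType) q t :
  symmetric e -> (forall u : V, (0 < deg e u)%N) -> forall j,
  \sum_s (deg e s)%:R * wj e R q t j s + (deg e t)%:R =
  (deg e t)%:R * \sum_(i < j.+1) (q%:R : R) ^+ i.
Proof.
move=> Hs Hd; elim=> [|j IH].
  by rewrite big1 ?big_ord_recl ?big_ord0 ?expr0 /=; [ring| move=> s _; rewrite mulr0].
have E1 : \sum_s (deg e s)%:R * wj e R q t j.+1 s =
   q%:R * ((deg e t)%:R + \sum_s (deg e s)%:R * wj e R q t j s).
  rewrite /= (eq_bigr (fun s => q%:R * ((deg e s)%:R *
      avg_nbr e s (fun y => (y == t)%:R + wj e R q t j y)))); last first.
    by move=> s _; rewrite mulrCA.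
  rewrite -mulr_sumr stationary //; congr (_ * _).
  rewrite (eq_bigr (fun x => (deg e x)%:R * (x == t)%:R + (deg e x)%:R * wj e R q t j x)); last by move=> x _; rewrite mulrDr.
  rewrite big_split /=; congr (_ + _).
  rewrite (bigD1 t) //= eqxx mulr1 big1 ?addr0 // => x /negbTE ->.
  by rewrite mulr0.
have IH' : \sum_s (deg e s)%:R * wj e R q t j s =
  (deg e t)%:R * \sum_(i < j.+1) (q%:R : R) ^+ i - (deg e t)%:R.
  by rewrite -IH; ring.
rewrite E1 IH' [in RHS]big_ord_recl expr0.
under [in RHS]eq_bigr => i _ do rewrite lift0 exprS.
rewrite -mulr_sumr; ring.
Qed.

Theorem lemma3p9 (V : finType) (e : rel V) (R : realFieldType) (q : nat)
    (alpha : R) :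
  symmetric e -> irreflexive e ->
  (forall u : V, (0 < deg e u)%N) ->
  (0 < q)%N -> 0 < alpha -> alpha <= 1 ->
  forall v : V, alpha <= reach e R q v ->
    (#|V|%:R * alpha / (c_q q)%:R <= (deg e v)%:R :> R).
Proof.
move=> Hs Hirr Hd Hq Ha Ha1 v Hv.
set C := \sum_(i < q.+1) (q%:R : R) ^+ i.
have HC : (c_q q)%:R = C.
  by rewrite /c_q natr_sum; apply: eq_bigr => i _; rewrite natrX.
have Hn : (0 < #|V|)%N by apply/card_gt0P; exists v.
have HSum : \sum_s rbfs_reach_from e R q s v <= (deg e v)%:R * C.
  apply: le_trans (_ : \sum_s ((v == s)%:R + wj e R q v q s) <= _).
    apply: ler_sum => s _; rewrite /rbfs_reach_from.
    apply: le_trans (@main_bound _ e R q v Hd _ _ _ _ _) _.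
      by rewrite /Inv /= eqxx.
    rewrite /Phi big_seq1 /= eqxx in_set1.
    rewrite /wt; have -> : (if (0 < q.-1)%N then (q - 0)%N else 1%N) = q by case: ifP; lia.
    by [].
  rewrite big_split /= (bigD1 v) //= eqxx big1 ?addr0; last first.
    by move=> s /negbTE; rewrite eq_sym => ->.
  rewrite -(@S_closed _ e R q v Hs Hd q) -/C addrC lerD //.
    apply: ler_sum => s _; rewrite ler_peMl ?wj_ge0 //.
    by rewrite (ler_nat R 1) Hd.
  by rewrite (ler_nat R 1) Hd.
have HCpos : 0 < C by rewrite -HC ltr0n /c_q big_ord_recl expn0.
rewrite HC ler_pdivrMr //.
move: Hv; rewrite /reach ler_pdivlMr ?ltr0n // => Hv.
rewrite mulrC; exact: le_trans Hv HSum.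
Qed.
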